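(* Let $(\mathbb{K},|\cdot|)$ be an algebraically closed normed field, $f\in\mathbb{K}[z]$ a polynomial of degree $n\ge2$, $\xi\in\mathbb{K}^n$ a root-vector of $f$, $N\ge1$ and $1\le p\le\infty$. Suppose $x^{(0)}\in\mathbb{K}^n$ has pairwise distinct components and $\Psi(E(x^{(0)}))\le2$. Then $f$ has only simple zeros, and the $N$th Weierstrass-type iteration $x^{(k+1)}=T^{(N)}(x^{(k)})$ is well-defined and converges to $\xi$ with error estimates \[ \|x^{(k+1)}-\xi\|\preceq\lambda^{N(N+1)^k}\|x^{(k)}-\xi\|,\qquad \|x^{(k)}-\xi\|\preceq\lambda^{(N+1)^k-1}\|x^{(0)}-\xi\| \] for all $k\ge0$, where $\lambda=\phi(E(x^{(0)}))$. Moreover, if $\Psi(E(x^{(0)}))<2$, the iteration converges to $\xi$ with order of convergence $N+1$.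
   Context: $a_0$ is the leading coefficient of $f$. For $1\le p\le\infty$, $\|x\|_p=(\sum_i|x_i|^p)^{1/p}$ (max-norm if $p=\infty$). For $x\in\mathbb{K}^n$, $\|x\|=(|x_1|,\dots,|x_n|)\in\mathbb{R}^n$ and $\preceq$ is the coordinatewise order on $\mathbb{R}^n$. $d(x)=(d_1(x),\dots,d_n(x))$, $d_i(x)=\min_{j\ne i}|x_i-x_j|$; for $x\in\mathbb{K}^n$, $y\in\mathbb{R}^n$ with nonzero components, $x/y=(|x_1|/y_1,\dots,|x_n|/y_n)$. A root-vector of $f$ is $\xi\in\mathbb{K}^n$ with $f(z)=a_0\prod_i(z-\xi_i)$ for all $z$. $E(x)=\|(x-\xi)/d(x)\|_p$. Weierstrass-type maps: $T^{(0)}(x)=x$ on $D_0=\mathbb{K}^n$; $D_{N+1}=\{x\in D_N: x_i\ne T^{(N)}_j(x)\ \forall i\ne j\}$, and for $x\in D_{N+1}$, $T^{(N+1)}_i(x)=x_i-\dfrac{f(x_i)}{a_0\prod_{j\ne i}(x_i-T^{(N)}_j(x))}$. The iteration is well-defined if $x^{(k)}\in D_N$ for all $k$. $\omega(t)=\left(1+\frac{t}{(n-1)^{1/p}}\right)^{n-1}$ (with $(n-1)^{1/p}=1$ if $p=\infty$), $\Psi(t)=(1+2t)\omega(t)$ for $t\ge0$, $R$ the unique positive solution of $\Psi(t)=2$, and $\phi(t)=\dfrac{\omega(t)-1}{1-2t\omega(t)}$ for $t\in[0,R]$. *)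

(* Defs.v *)
From HB Require Import structures.
From mathcomp Require Import all_boot all_order all_algebra.
From mathcomp Require Import all_classical all_reals all_analysis.
Set Implicit Arguments. Unset Strict Implicit. Unset Printing Implicit Defensive.
Import Order.TTheory GRing.Theory Num.Theory.
Import numFieldNormedType.Exports.
Local Open Scope classical_set_scope.
Local Open Scope ring_scope.

Definition is_abs (K : fieldType) (R : realType) (abs : K -> R) : Prop :=
  [/\ forall x, abs x = 0 <-> x = 0,
      forall x, 0 <= abs x,
      forall x y, abs (x * y) = abs x * abs y
    & forall x y, abs (x + y) <= abs x + abs y].

Definition pnorm (R : realType) (n : nat) (p : \bar R) (v : 'I_n -> R) : R :=
  match p with
  | EFin r => (\sum_(i < n) `|v i| `^ r) `^ (r^-1)
  | +oo%E => \big[Num.max/0]_(i < n) `|v i|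
  | -oo%E => 0
  end.

Definition rootp (R : realType) (n : nat) (p : \bar R) : R :=
  match p with
  | EFin r => (n.-1)%:R `^ (r^-1)
  | _ => 1
  end.

Definition omega (R : realType) (n : nat) (p : \bar R) (t : R) : R :=
  (1 + t / rootp n p) ^+ n.-1.

Definition Psi (R : realType) (n : nat) (p : \bar R) (t : R) : R :=
  (1 + 2 * t) * omega n p t.

Definition phi (R : realType) (n : nat) (p : \bar R) (t : R) : R :=
  (omega n p t - 1) / (1 - 2 * t * omega n p t).

(* d_i(x) = min_{j <> i} |x_i - x_j|  (for n >= 2 the index set is nonempty;
   the seed of the min is an upper bound of all the terms). *)
Definition dvec (K : fieldType) (R : realType) (abs : K -> R) (n : nat)
    (x : 'I_n -> K) (i : 'I_n) : R :=
  \big[Num.min/ \sum_(j < n | j != i) abs (x i - x j)]_(j < n | j != i)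
     abs (x i - x j).

Definition Efun (K : fieldType) (R : realType) (abs : K -> R) (n : nat)
    (p : \bar R) (xi x : 'I_n -> K) : R :=
  pnorm p (fun i => abs (x i - xi i) / dvec abs x i).

Definition root_vector (K : fieldType) (n : nat) (f : {poly K}) (xi : 'I_n -> K)
  : Prop := forall z, f.[z] = lead_coef f * \prod_(i < n) (z - xi i).

(* Weierstrass-type maps T^(N) (as total functions) ... *)
Fixpoint Tmap (K : fieldType) (n : nat) (f : {poly K}) (N : nat) (x : 'I_n -> K)
  : 'I_n -> K :=
  match N with
  | 0%N => x
  | N'.+1 => fun i =>
      x i - f.[x i] / (lead_coef f * \prod_(j < n | j != i) (x i - Tmap f N' x j))
  end.

Fixpoint inD (K : fieldType) (n : nat) (f : {poly K}) (N : nat) (x : 'I_n -> K)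
  : Prop :=
  match N with
  | 0%N => True
  | N'.+1 => inD f N' x /\ (forall i j : 'I_n, i != j -> x i != Tmap f N' x j)
  end.

Definition iterT (K : fieldType) (n : nat) (f : {poly K}) (N : nat)
    (x0 : 'I_n -> K) (k : nat) : 'I_n -> K := iter k (Tmap f N) x0.

Definition maxerr (K : fieldType) (R : realType) (abs : K -> R) (n : nat)
    (x xi : 'I_n -> K) : R := \big[Num.max/0]_(i < n) abs (x i - xi i).

Definition conv_order (K : fieldType) (R : realType) (abs : K -> R) (n : nat)
    (x : nat -> 'I_n -> K) (xi : 'I_n -> K) (r : nat) : Prop :=
  (forall i, (fun k => abs (x k i - xi i)) @ \oo --> (0 : R)) /\
  exists C : R, forall k, maxerr abs (x k.+1) xi <= C * maxerr abs (x k) xi ^+ r.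

(* Main.v *)
Require Import Defs.
From HB Require Import structures.
From mathcomp Require Import all_boot all_order all_algebra.
From mathcomp Require Import all_classical all_reals all_analysis.
From mathcomp Require Import ring lra zify.
Import Order.TTheory GRing.Theory Num.Theory.
Import numFieldNormedType.Exports.
Local Open Scope classical_set_scope.
Local Open Scope ring_scope.
Set Implicit Arguments. Unset Strict Implicit. Unset Printing Implicit Defensive.

Section AbsLemmas.
Variables (K : fieldType) (R : realType) (abs : K -> R) (habs : is_abs abs).

Lemma abs_ge0 x : 0 <= abs x. Proof. by case: habs. Qed.
Lemma absM x y : abs (x * y) = abs x * abs y. Proof. by case: habs. Qed.
Lemma abs_triangle x y : abs (x + y) <= abs x + abs y. Proof. by case: habs. Qed.
Lemma abs_eq0 x : abs x = 0 <-> x = 0. Proof. by case: habs. Qed.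
Lemma abs0 : abs 0 = 0. Proof. exact/abs_eq0. Qed.
Lemma abs_neq0 x : x != 0 -> 0 < abs x.
Proof. move=> hx; rewrite lt_neqAle abs_ge0 andbT eq_sym; apply/eqP => /abs_eq0/eqP; exact/negP. Qed.
Lemma abs1 : abs 1 = 1.
Proof.
have h := absM 1 1; rewrite mulr1 in h.
have h0 : abs 1 != 0 by apply/eqP => /abs_eq0/eqP; rewrite oner_eq0.
by apply: (mulfI h0); rewrite -h mulr1.
Qed.
Lemma absN1 : abs (-1) = 1.
Proof.
have h := absM (-1) (-1); rewrite mulrNN mulr1 abs1 in h.
have := abs_ge0 (-1) => ?.
apply/eqP; rewrite eq_le; apply/andP; split; nra.
Qed.
Lemma absN x : abs (- x) = abs x. Proof. by rewrite -mulN1r absM absN1 mul1r. Qed.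
Lemma abs_subC x y : abs (x - y) = abs (y - x). Proof. by rewrite -absN opprB. Qed.
Lemma absV x : abs (x^-1) = (abs x)^-1.
Proof.
have [->|hx] := eqVneq x 0; first by rewrite invr0 abs0 invr0.
have h := absM x (x^-1); rewrite mulfV // abs1 in h.
have hx' := @abs_neq0 x hx.
by apply: (mulfI (lt0r_neq0 hx')); rewrite -h mulfV ?lt0r_neq0.
Qed.
Lemma abs_div x y : abs (x / y) = abs x / abs y. Proof. by rewrite absM absV. Qed.
Lemma abs_sub_ge x y : abs x - abs y <= abs (x - y).
Proof. have := abs_triangle (x - y) y; rewrite subrK; lra. Qed.
Lemma abs_sub_le x y : abs (x - y) <= abs x + abs y.
Proof. by rewrite -(absN y); apply: abs_triangle. Qed.

Lemma abs_prod (I : Type) (r : seq I) (P : pred I) (F : I -> K) :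
  abs (\prod_(j <- r | P j) F j) = \prod_(j <- r | P j) abs (F j).
Proof.
elim: r => [|a r IH]; first by rewrite !big_nil abs1.
by rewrite !big_cons; case: (P a); rewrite ?absM IH.
Qed.

Lemma abs_prod1 (I : Type) (r : seq I) (P : pred I) (u : I -> K) :
  abs (\prod_(j <- r | P j) (1 + u j) - 1) <= \prod_(j <- r | P j) (1 + abs (u j)) - 1.
Proof.
elim: r => [|a r IH]; first by rewrite !big_nil subrr abs0.
rewrite !big_cons; case: (P a) => //.
set Pk := \prod_(j <- r | P j) (1 + u j) in IH *.
set Q := \prod_(j <- r | P j) (1 + abs (u j)) in IH *.
have -> : (1 + u a) * Pk - 1 = u a * Pk + (Pk - 1) by ring.
apply: le_trans (abs_triangle _ _) _; rewrite absM.
have hP : abs Pk <= Q.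
  have := abs_triangle (Pk - 1) 1; rewrite subrK abs1; lra.
have := abs_ge0 (u a); have := abs_ge0 Pk => ? ?.
have : abs (u a) * abs Pk <= abs (u a) * Q by apply: ler_wpM2l.
nra.
Qed.

End AbsLemmas.

Section RealLemmas.
Variable R : realType.

Lemma conv2 (r l u v : R) : 1 <= r -> 0 <= l <= 1 -> 0 <= u -> 0 <= v ->
  (l * u + (1 - l) * v) `^ r <= l * u `^ r + (1 - l) * v `^ r.
Proof.
move=> r1 hl u0 v0.
have P : Itv.spec (@Itv.num_sem R) (Itv.Real `[0, 1]%Z) l.
  by rewrite /Itv.spec /Itv.num_sem /= in_itv /= num_real.
pose t : {i01 R} := @Itv.mk _ _ (Itv.Real `[0, 1]%Z) l P.
have := @convex_powR R r r1 t u v.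
rewrite !inE /= !in_itv /= !andbT => /(_ u0 v0).
by rewrite !convRE /=.
Qed.

End RealLemmas.

Section RealLemmas2.
Variable R : realType.

Lemma jensen_seq (r : R) (s : seq R) : 1 <= r -> all (fun a => 0 <= a) s ->
  (0 < size s)%N ->
  ((\sum_(a <- s) a) / (size s)%:R) `^ r <= (\sum_(a <- s) a `^ r) / (size s)%:R.
Proof.
move=> r1; elim: s => [//|a s IH] /= /andP[a0 hs] _.
rewrite !big_cons.
have S0 : 0 <= \sum_(b <- s) b by rewrite big_seq sumr_ge0 // => b /(allP hs).
case: s IH hs S0 => [|b s] IH hs S0.
  by rewrite !big_nil !addr0 divr1 divr1.
set m := size (b :: s).
have m0 : (0 < m)%N by [].
have mR : (0 : R) < m%:R by rewrite ltr0n.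
move: (IH hs m0).
set S := \sum_(c <- b :: s) c.
set Sr := \sum_(c <- b :: s) c `^ r.
move=> IH'.
pose l : R := 1 / (m%:R + 1).
have l01 : 0 <= l <= 1.
  rewrite /l; apply/andP; split; first by rewrite divr_ge0 // ltW // ltr_wpDl.
  by rewrite ler_pdivrMr ?mul1r ?lerDr // ltr_wpDl.
have hm : (m.+1%:R : R) = m%:R + 1 by rewrite -addn1 natrD.
have -> : (a + S) / m.+1%:R = l * a + (1 - l) * (S / m%:R).
  rewrite hm /l; field; rewrite ?lt0r_neq0 // ltr_wpDl //.
have Sm0 : 0 <= S / m%:R by rewrite divr_ge0 // ltW.
apply: le_trans (conv2 r1 l01 a0 Sm0) _.
have l1 : 0 <= 1 - l by move: l01 => /andP[_]; rewrite subr_ge0.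
apply: le_trans (_ : l * a `^ r + (1 - l) * (Sr / m%:R) <= _).
  by rewrite lerD2l ler_wpM2l.
suff -> : l * a `^ r + (1 - l) * (Sr / m%:R) = (a `^ r + Sr) / m.+1%:R by [].
rewrite hm /l; field; rewrite ?lt0r_neq0 // ltr_wpDl //.
Qed.

Lemma prod_conv (I : Type) (rs : seq I) (P : pred I) (a : I -> R) (c : R) :
  0 <= c <= 1 -> (forall j, P j -> 0 <= a j) ->
  \prod_(j <- rs | P j) (1 + c * a j) - 1 <= c * (\prod_(j <- rs | P j) (1 + a j) - 1).
Proof.
move=> /andP[c0 c1] ha; elim: rs => [|b rs IH]; first by rewrite !big_nil !subrr mulr0.
rewrite !big_cons; case hb: (P b) => //.
have a0 := ha b hb.
set Pc := \prod_(j <- rs | P j) (1 + c * a j) in IH *.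
set Q := \prod_(j <- rs | P j) (1 + a j) in IH *.
have Pc0 : 0 <= Pc by rewrite prodr_ge0 // => j /ha aj; rewrite addr_ge0 // mulr_ge0.
have Q1 : 1 <= Q.
  rewrite /Q; elim: rs {IH Pc Pc0 Q} => [|d rs IH]; first by rewrite big_nil.
  rewrite big_cons; case hd: (P d) => //; have := ha d hd.
  move=> ? ; nra.
have ca : 0 <= c * a b by rewrite mulr_ge0.
have h1 : (1 + c * a b) * Pc <= (1 + c * a b) * (1 + c * (Q - 1)).
  by rewrite ler_wpM2l ?addr_ge0 //; lra.
have h2 : c * c * a b * (Q - 1) <= c * a b * (Q - 1).
  have h0 : 0 <= (1 - c) * (c * a b * (Q - 1)) by rewrite !mulr_ge0 // subr_ge0.
  nra.
nra.
Qed.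

Lemma pow_conv (m : nat) (c y : R) : 0 <= c <= 1 -> 0 <= y ->
  (1 + c * y) ^+ m - 1 <= c * ((1 + y) ^+ m - 1).
Proof.
move=> hc y0.
have := @prod_conv 'I_m (index_enum _) xpredT (fun _ => y) c hc (fun _ _ => y0).
by rewrite /= !prodr_const card_ord.
Qed.

End RealLemmas2.

Section PNorm.
Variable R : realType.

Lemma pcases (p : \bar R) : (1 <= p)%E -> p = +oo%E \/ exists2 r : R, 1 <= r & p = r%:E.
Proof.
case: p => [r r1|_|//]; last by left.
by right; exists r => //; rewrite lee_fin in r1.
Qed.

Lemma powR_inv_le (r x y : R) : 0 < r -> 0 <= x -> 0 <= y -> x `^ r <= y `^ r -> x <= y.
Proof.
move=> r0 x0 y0 h; rewrite leNgt; apply/negP => yx.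
have := gt0_ltr_powR r0 y0 x0 yx; rewrite ltNge h //.
Qed.

Lemma powRK (r x : R) : 0 < r -> 0 <= x -> (x `^ r) `^ r^-1 = x.
Proof. by move=> r0 x0; rewrite -powRrM mulfV ?gt_eqF // powRr1. Qed.

Lemma powRKV (r x : R) : 0 < r -> 0 <= x -> (x `^ r^-1) `^ r = x.
Proof. by move=> r0 x0; rewrite -powRrM mulVf ?gt_eqF // powRr1. Qed.

Variable n : nat.
Variable p : \bar R.
Hypothesis p1 : (1 <= p)%E.

Lemma pnorm_ge0 (v : 'I_n -> R) : 0 <= pnorm p v.
Proof.
case: (pcases p1) => [->|[r r1 ->]] /=; last exact: powR_ge0.
elim/big_ind: _ => //= x y x0 y0; rewrite le_max x0 //.
Qed.

Lemma pnorm_comp (v : 'I_n -> R) i : `|v i| <= pnorm p v.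
Proof.
case: (pcases p1) => [->|[r r1 ->]] /=; first exact: le_bigmax.
have r0 : 0 < r by lra.
rewrite -{1}(@powRK r `|v i|) //.
apply: ge0_ler_powR.
- by rewrite invr_ge0; lra.
- by rewrite nnegrE powR_ge0.
- by rewrite nnegrE sumr_ge0 // => j _; rewrite powR_ge0.
by rewrite (bigD1 i) //= lerDl sumr_ge0 // => j _; rewrite powR_ge0.
Qed.

Lemma pnorm_le (v w : 'I_n -> R) (c : R) : 0 <= c -> (forall i, `|v i| <= c * `|w i|) ->
  pnorm p v <= c * pnorm p w.
Proof.
move=> c0 h; case: (pcases p1) => [->|[r r1 ->]] /=.
  apply: bigmax_le => [|j _]; first by rewrite mulr_ge0 // bigmax_ge_id.
  apply: le_trans (h j) _; apply: ler_wpM2l => //; exact: le_bigmax.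
have r0 : 0 < r by lra.
have Sw0 : 0 <= \sum_(j < n) `|w j| `^ r by rewrite sumr_ge0 // => j _; rewrite powR_ge0.
have -> : c = (c `^ r) `^ r^-1 by rewrite powRK.
rewrite -powRM ?powR_ge0 //.
apply: ge0_ler_powR.
- by rewrite invr_ge0; lra.
- by rewrite nnegrE sumr_ge0 // => j _; rewrite powR_ge0.
- by rewrite nnegrE mulr_ge0 // powR_ge0.
rewrite mulr_sumr; apply: ler_sum => j _.
rewrite -powRM //; apply: ge0_ler_powR; rewrite ?nnegrE ?mulr_ge0 //; first by lra.
Qed.

Lemma pnorm_le_sum (v : 'I_n -> R) : pnorm p v <= \sum_(j < n) `|v j|.
Proof.
have T0 : 0 <= \sum_(j < n) `|v j| by rewrite sumr_ge0.
case: (pcases p1) => [->|[r r1 ->]] /=.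
  apply: bigmax_le => // j _; rewrite (bigD1 j) //= lerDl sumr_ge0 //.
have r0 : 0 < r by lra.
set T := \sum_(j < n) `|v j| in T0 *.
rewrite -(@powRK r T) //.
apply: ge0_ler_powR.
- by rewrite invr_ge0; lra.
- by rewrite nnegrE sumr_ge0 // => j _; rewrite powR_ge0.
- by rewrite nnegrE powR_ge0.
rewrite -mulr_powRB1 // mulr_suml; apply: ler_sum => j _.
rewrite -mulr_powRB1 //; apply: ler_wpM2l => //.
apply: ge0_ler_powR; rewrite ?nnegrE //; first by lra.
by rewrite /T (bigD1 j) //= lerDl sumr_ge0.
Qed.

Lemma sum_predC1 (F : 'I_n -> R) (i : 'I_n) :
  \sum_(a <- [seq F j | j <- enum (predC1 i)]) a = \sum_(j < n | j != i) F j.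
Proof. by rewrite big_map big_enum /=. Qed.

Lemma pnorm_mean (v : 'I_n -> R) (i : 'I_n) : (1 < n)%N ->
  (\sum_(j < n | j != i) `|v j|) / (n.-1)%:R <= pnorm p v / rootp n p.
Proof.
move=> n1.
have hsz : (0 < n.-1)%N by rewrite -subn1 subn_gt0.
have mR : (0 : R) < (n.-1)%:R by rewrite ltr0n.
case: (pcases p1) => [->|[r r1 ->]] /=.
  rewrite divr1 ler_pdivrMr //.
  set M := \big[Num.max/0]_(i0 < n) `|v i0|.
  apply: le_trans (_ : \sum_(j < n | j != i) M <= _).
    by apply: ler_sum => j _; apply: le_bigmax.
  by rewrite sumr_const cardC1 card_ord mulr_natr.
have r0 : 0 < r by lra.
set A := (\sum_(j < n | j != i) `|v j|) / (n.-1)%:R.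
set S := \sum_(i0 < n) `|v i0| `^ r.
have A0 : 0 <= A by rewrite divr_ge0 ?sumr_ge0 // ltW.
have S0 : 0 <= S by rewrite sumr_ge0 // => j _; rewrite powR_ge0.
have m0 : 0 < (n.-1)%:R `^ r^-1 by rewrite powR_gt0.
rewrite ler_pdivlMr //.
apply: (@powR_inv_le r) => //; rewrite ?mulr_ge0 ?powR_ge0 //; first by rewrite sumr_ge0.
rewrite powRM ?powR_ge0 // powRKV ?powRKV //; try exact: ltW.
have hs := @jensen_seq R r [seq `|v j| | j <- enum (predC1 i)] r1.
rewrite size_map -cardE cardC1 card_ord !big_map !big_enum /= in hs.
have hall : all (fun a => 0 <= a) [seq `|v j| | j <- enum (predC1 i)].
  by apply/allP => a /mapP[j _ ->].
have {hs}hj := hs hall hsz.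
rewrite -ler_pdivlMr //; apply: le_trans hj _.
rewrite ler_pM2r ?invr_gt0 //.
rewrite /S [X in _ <= X](bigD1 i) //=.
apply: le_trans (_ : 0 + _ <= _); first by rewrite add0r.
apply: lerD => //; exact: powR_ge0.
Qed.

End PNorm.

Section Omega.
Variable R : realType.
Variable n : nat.
Variable p : \bar R.
Hypothesis p1 : (1 <= p)%E.
Hypothesis n1 : (1 < n)%N.

Let hsz : (0 < n.-1)%N. Proof. by rewrite -subn1 subn_gt0. Qed.

Lemma rootp_gt0 : 0 < rootp n p :> R.
Proof.
case: (pcases p1) => [->|[r r1 ->]] //=; rewrite powR_gt0 // ltr0n //.
Qed.

Let rp := rootp_gt0.

Lemma omega_ge1 (t : R) : 0 <= t -> 1 <= omega n p t.
Proof. by move=> t0; rewrite /omega exprn_ege1 // lerDl divr_ge0 // (ltW rp). Qed.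

Lemma omega_ge0 (t : R) : 0 <= t -> 0 <= omega n p t.
Proof. by move=> t0; apply: le_trans (omega_ge1 t0). Qed.

Lemma omega_gt1 (t : R) : 0 < t -> 1 < omega n p t.
Proof.
move=> t0; rewrite /omega expr_gt1 //; first by rewrite ltrDl divr_gt0.
by rewrite addr_ge0 // divr_ge0 // ltW.
Qed.

Lemma omega0 : omega n p 0 = 1.
Proof. by rewrite /omega mul0r addr0 expr1n. Qed.

Lemma omega_mono (s t : R) : 0 <= s -> s <= t -> omega n p s <= omega n p t.
Proof.
move=> s0 st; have t0 : 0 <= t by exact: le_trans st.
rewrite /omega lerXn2r ?nnegrE ?addr_ge0 ?divr_ge0 ?(ltW rp) //.
by rewrite lerD2l ler_pM2r ?invr_gt0.
Qed.

Lemma omega_conv (c t : R) : 0 <= c <= 1 -> 0 <= t ->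
  omega n p (c * t) - 1 <= c * (omega n p t - 1).
Proof.
move=> hc t0; rewrite /omega -mulrA; apply: pow_conv => //.
by rewrite divr_ge0 // ltW.
Qed.

Lemma prod_omega (t s : 'I_n -> R) (i : 'I_n) (c : R) :
  (forall j, 0 <= t j) -> 0 <= c ->
  (forall j, j != i -> 0 <= s j <= c * t j) ->
  \prod_(j < n | j != i) (1 + s j) <= omega n p (c * pnorm p t).
Proof.
move=> t0 c0 hs.
apply: le_trans (_ : \prod_(j < n | j != i) (1 + c * t j) <= _).
  apply: ler_prod => j ji; have /andP[s0 sc] := hs j ji.
  by rewrite addr_ge0 //= lerD2l.
have hA : {in predC1 i, forall j, 0 <= 1 + c * t j}.
  by move=> j _; rewrite addr_ge0 // mulr_ge0.
have := (leif_AGM hA).1.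
rewrite cardC1 card_ord => h; apply: le_trans h _.
rewrite /omega lerXn2r ?nnegrE //.
- by rewrite divr_ge0 ?sumr_ge0 // => j _; rewrite addr_ge0 // mulr_ge0.
- by rewrite addr_ge0 // divr_ge0 ?mulr_ge0 ?pnorm_ge0 // ltW.
rewrite big_split /= sumr_const cardC1 card_ord -mulr_sumr.
have mR : (0 : R) < (n.-1)%:R by rewrite ltr0n.
rewrite mulrDl mulfV ?gt_eqF // lerD2l -!mulrA ler_wpM2l //.
apply: le_trans (pnorm_mean p1 t i n1); rewrite ler_pM2r ?invr_gt0 //.
by apply: ler_sum => j _; rewrite ger0_norm.
Qed.


Lemma Psi_mono (s t : R) : 0 <= s -> s <= t -> Psi n p s <= Psi n p t.
Proof.
move=> s0 st; rewrite /Psi; apply: ler_pM; rewrite ?addr_ge0 ?mulr_ge0 ?omega_ge0 //.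
- by rewrite lerD2l ler_pM2l.
- exact: omega_mono.
Qed.

Lemma E_le_half (E : R) : 0 <= E -> Psi n p E <= 2 -> E <= 2^-1.
Proof.
move=> E0; rewrite /Psi => h; have w1 := omega_ge1 E0.
have : 1 + 2 * E <= 2 by nra.
lra.
Qed.

Lemma den_pos (E : R) : 0 <= E -> Psi n p E <= 2 -> 0 < 1 - 2 * E * omega n p E.
Proof.
move=> E0 h; have [->|Ep] := eqVneq E 0; first by rewrite mulr0 mul0r subr0.
have Ep' : 0 < E by rewrite lt_neqAle eq_sym Ep.
have w1 := omega_gt1 Ep'; move: h; rewrite /Psi => h; nra.
Qed.

Lemma beta_le_den (E : R) : 0 <= E -> Psi n p E <= 2 ->
  omega n p E - 1 <= 1 - 2 * E * omega n p E.
Proof. by move=> E0; rewrite /Psi => h; nra. Qed.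

Lemma phi_ge0 (E : R) : 0 <= E -> Psi n p E <= 2 -> 0 <= phi n p E.
Proof.
move=> E0 h; have d := den_pos E0 h; rewrite /phi.
apply: divr_ge0; [rewrite subr_ge0; exact: omega_ge1 | exact: ltW].
Qed.

Lemma phi_le1 (E : R) : 0 <= E -> Psi n p E <= 2 -> phi n p E <= 1.
Proof.
move=> E0 h; rewrite /phi ler_pdivrMr ?mul1r ?den_pos //; exact: beta_le_den.
Qed.

Lemma beta_le_phi (E : R) : 0 <= E -> Psi n p E <= 2 -> omega n p E - 1 <= phi n p E.
Proof.
move=> E0 h; have d0 := den_pos E0 h; rewrite /phi ler_pdivlMr //.
have w1 := omega_ge1 E0.
have : 0 <= (omega n p E - 1) * (2 * E * omega n p E).
  by apply: mulr_ge0; [lra | rewrite !mulr_ge0 //; lra].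
nra.
Qed.

Lemma phi_quasi (E t s : R) : 0 <= E -> Psi n p E <= 2 -> 0 <= s <= 1 ->
  0 <= t -> t <= s * E -> phi n p t <= s * phi n p E.
Proof.
move=> E0 h /andP[s0 s1] t0 ts.
have d0 := den_pos E0 h.
have tE : t <= E by apply: le_trans ts _; rewrite -{2}(mul1r E) ler_wpM2r.
have wt := omega_mono t0 tE.
have wts := omega_mono t0 ts.
have wc := @omega_conv s E (introT andP (conj s0 s1)) E0.
have wt1 := omega_ge1 t0.
have dt : 1 - 2 * E * omega n p E <= 1 - 2 * t * omega n p t.
  have : t * omega n p t <= E * omega n p E by apply: ler_pM => //; lra.
  lra.
rewrite /phi mulrA ler_pdivrMr; last exact: lt_le_trans dt.
apply: (@le_trans _ _ (s * (omega n p E - 1) / (1 - 2 * E * omega n p E) *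
   (1 - 2 * E * omega n p E))).
  by rewrite divfK ?gt_eqF //; lra.
apply: ler_wpM2l => //.
apply: divr_ge0; last exact: ltW.
by apply: mulr_ge0 => //; rewrite subr_ge0; exact: omega_ge1.
Qed.

Lemma phi_lin (E t : R) : 0 <= E -> Psi n p E <= 2 -> 0 <= t -> t <= E ->
  phi n p t <= t * ((omega n p 1 - 1) / (1 - 2 * E * omega n p E)).
Proof.
move=> E0 h t0 tE.
have Eh := E_le_half E0 h.
have t1 : t <= 1 by lra.
have d0 := den_pos E0 h.
have wt := omega_mono t0 tE.
have wt1 := omega_ge1 t0.
have wc := @omega_conv t 1 (introT andP (conj t0 t1)) ler01.
rewrite mulr1 in wc.
have dt : 1 - 2 * E * omega n p E <= 1 - 2 * t * omega n p t.
  have : t * omega n p t <= E * omega n p E by apply: ler_pM => //; lra.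
  lra.
rewrite /phi mulrA ler_pdivrMr; last exact: lt_le_trans dt.
apply: (@le_trans _ _ (t * (omega n p 1 - 1) / (1 - 2 * E * omega n p E) *
   (1 - 2 * E * omega n p E))).
  by rewrite divfK ?gt_eqF //; lra.
apply: ler_wpM2l => //.
apply: divr_ge0; last exact: ltW.
by apply: mulr_ge0 => //; rewrite subr_ge0; exact: omega_ge1.
Qed.
End Omega.

Section Dvec.
Variables (K : fieldType) (R : realType) (abs : K -> R) (habs : is_abs abs).
Variable n : nat.
Hypothesis n1 : (1 < n)%N.

Lemma exists_other (i : 'I_n) : exists j : 'I_n, j != i.
Proof.
case: (pickP (predC1 i)) => [j hj|h0]; first by exists j.
have : #|predC1 i| = 0%N by apply: eq_card0.
rewrite cardC1 card_ord => h; have : (1 < n.-1.+1)%N by rewrite prednK // ltnW.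
by rewrite h.
Qed.

Lemma dvec_le (x : 'I_n -> K) i j : j != i -> dvec abs x i <= abs (x i - x j).
Proof. by move=> ji; rewrite /dvec; apply: (bigmin_le_cond _ (fun j => abs (x i - x j))). Qed.

Lemma dvec_ge (x : 'I_n -> K) i b :
  (forall j, j != i -> b <= abs (x i - x j)) -> b <= dvec abs x i.
Proof.
move=> h; rewrite /dvec; apply/bigmin_geP; split => // .
have [j ji] := exists_other i.
rewrite (bigD1 j) //=; apply: le_trans (h j ji) _.
rewrite lerDl sumr_ge0 // => k _; exact: abs_ge0.
Qed.

Lemma dvec_pos (x : 'I_n -> K) i :
  (forall j, j != i -> x i != x j) -> 0 < dvec abs x i.
Proof.
move=> h; rewrite /dvec; apply: lt_bigmin => [|j ji].
  have [j ji] := exists_other i.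
  rewrite (bigD1 j) //=; apply: lt_le_trans (_ : abs (x i - x j) <= _).
    by apply: abs_neq0; rewrite // subr_eq0 h.
  rewrite lerDl sumr_ge0 // => k _; exact: abs_ge0.
by apply: abs_neq0; rewrite // subr_eq0 h.
Qed.

End Dvec.

Section Alg.
Variables (K : fieldType) (n : nat) (f : {poly K}) (xi : 'I_n -> K).
Hypothesis hf : root_vector f xi.
Hypothesis a0nz : lead_coef f != 0.

Lemma T_alg (x y : 'I_n -> K) i : (forall j, j != i -> x i != y j) ->
  x i - (x i - f.[x i] / (lead_coef f * \prod_(j < n | j != i) (x i - y j))) =
  (x i - xi i) * \prod_(j < n | j != i) (1 + (y j - xi j) / (x i - y j)).
Proof.
move=> h.
have hD : \prod_(j < n | j != i) (x i - y j) != 0.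
  rewrite prodf_seq_neq0; apply/allP => j _; apply/implyP => ji.
  by rewrite subr_eq0; apply: h.
have hP : \prod_(j < n | j != i) (1 + (y j - xi j) / (x i - y j)) =
    \prod_(j < n | j != i) ((x i - xi j) / (x i - y j)).
  apply: eq_bigr => j ji; have hj : x i - y j != 0 by rewrite subr_eq0; apply: h.
  by rewrite -{1}(divff hj) -mulrDl; congr (_ / _); rewrite addrA subrK.
rewrite hP prodf_div hf (bigD1 i) //=.
by field; rewrite hD a0nz.
Qed.

End Alg.

Section Step.
Variables (K : fieldType) (R : realType) (abs : K -> R) (habs : is_abs abs).
Variables (n : nat) (f : {poly K}) (xi : 'I_n -> K) (p : \bar R).
Hypothesis n1 : (1 < n)%N.
Hypothesis hf : root_vector f xi.
Hypothesis a0nz : lead_coef f != 0.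
Hypothesis p1 : (1 <= p)%E.
Definition tv (z : 'I_n -> K) (i : 'I_n) : R := abs (z i - xi i) / dvec abs z i.
Variable x : 'I_n -> K.
Hypothesis hx : forall i j, i != j -> x i != x j.
Hypothesis hPsi : Psi n p (Efun abs p xi x) <= 2.

Local Notation E := (Efun abs p xi x).
Local Notation t := (tv x).
Local Notation w := (omega n p E).
Local Notation phE := (phi n p E).

Lemma d_pos i : 0 < dvec abs x i.
Proof. by apply: dvec_pos => // j ji; apply: hx; rewrite eq_sym. Qed.

Lemma t_ge0 i : 0 <= t i.
Proof. by rewrite /tv divr_ge0 ?abs_ge0 // ltW // d_pos. Qed.

Lemma E_def : E = pnorm p t. Proof. by []. Qed.

Lemma E_ge0 : 0 <= E. Proof. by rewrite E_def pnorm_ge0. Qed.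

Lemma t_le_E i : t i <= E.
Proof. by rewrite E_def; have := pnorm_comp p1 t i; rewrite ger0_norm // t_ge0. Qed.

Lemma e_eq i : abs (x i - xi i) = t i * dvec abs x i.
Proof. by rewrite /tv divfK // gt_eqF // d_pos. Qed.

Lemma ej_le i j : j != i -> abs (x j - xi j) <= t j * abs (x i - x j).
Proof.
move=> ji; rewrite e_eq ler_wpM2l ?t_ge0 //.
by rewrite abs_subC //; apply: dvec_le; rewrite // eq_sym.
Qed.

Lemma ei_le i j : j != i -> abs (x i - xi i) <= t i * abs (x i - x j).
Proof. by move=> ji; rewrite e_eq ler_wpM2l ?t_ge0 //; apply: dvec_le. Qed.

Lemma den_gt0 : 0 < 1 - 2 * E * w.
Proof. by have := den_pos p1 n1 E_ge0 hPsi. Qed.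
Lemma w_ge1 : 1 <= w. Proof. by have := omega_ge1 p1 n1 E_ge0. Qed.
Lemma phE_ge0 : 0 <= phE. Proof. by have := phi_ge0 p1 n1 E_ge0 hPsi. Qed.
Lemma phE_le1 : phE <= 1. Proof. by have := phi_le1 p1 n1 E_ge0 hPsi. Qed.
Lemma beta_phE : w - 1 <= phE. Proof. by have := beta_le_phi p1 n1 E_ge0 hPsi. Qed.
Lemma phE_def : phE = (w - 1) / (1 - 2 * E * w). Proof. by []. Qed.

Definition bb (m : nat) : R := if m is m'.+1 then (w - 1) * phE ^+ m' else 1.
Definition aa (m : nat) : R := if m is 0%N then 0 else w.

Lemma aa_ge0 m : 0 <= aa m. Proof. by case: m => //= _; have := w_ge1; lra. Qed.
Lemma aa_le m : aa m <= w. Proof. by case: m => //=; have := w_ge1; lra. Qed.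
Lemma bb_ge0 m : 0 <= bb m.
Proof. by case: m => //= m; rewrite mulr_ge0 ?exprn_ge0 ?phE_ge0 // subr_ge0 w_ge1. Qed.
Lemma bb_le1 m : bb m <= 1.
Proof.
case: m => //= m; have h1 := w_ge1; have h2 := beta_phE; have h3 := phE_le1.
have : phE ^+ m <= 1 by rewrite exprn_ile1 ?phE_ge0.
have := exprn_ge0 m phE_ge0; nra.
Qed.

Lemma aaE_lt1 m : aa m * E < 1.
Proof.
have := den_gt0; have := aa_le m; have := w_ge1; have := E_ge0; have := aa_ge0 m.
nra.
Qed.

Definition cm (m : nat) : R := bb m / (1 - aa m * E).

Lemma cm_le m : cm m <= phE ^+ m.
Proof.
rewrite /cm; case: m => [|m] /=; first by rewrite mul0r subr0 divr1 expr0.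
have d1 : 0 < 1 - w * E by have := aaE_lt1 1; rewrite /aa; lra.
rewrite ler_pdivrMr // exprSr.
have h : w - 1 <= phE * (1 - w * E).
  rewrite phE_def; have d0 := den_gt0; rewrite -ler_pdivrMr //.
  apply: ler_wpM2l; first by rewrite subr_ge0 w_ge1.
  rewrite lef_pV2 ?posrE //; have := E_ge0; have := w_ge1; nra.
have := exprn_ge0 m phE_ge0 => hm.
have : phE ^+ m * (w - 1) <= phE ^+ m * (phE * (1 - w * E)) by apply: ler_wpM2l.
lra.
Qed.

Lemma cm_ge0 m : 0 <= cm m.
Proof. by rewrite /cm divr_ge0 ?bb_ge0 // subr_ge0 ltW // aaE_lt1. Qed.

Lemma cm_le1 m : cm m <= 1.
Proof. by apply: le_trans (cm_le m) _; rewrite exprn_ile1 ?phE_ge0 ?phE_le1. Qed.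

Lemma cm_beta m : cm m * (w - 1) <= bb m.+1.
Proof.
rewrite /= mulrC ler_wpM2l ?cm_le //; by rewrite subr_ge0 w_ge1.
Qed.


Lemma bbS_le m : bb m.+1 <= w - 1.
Proof.
rewrite /= -{2}(mulr1 (w - 1)) ler_wpM2l ?subr_ge0 ?w_ge1 //.
by rewrite exprn_ile1 ?phE_ge0 ?phE_le1.
Qed.

Lemma xdist_pos i j : j != i -> 0 < abs (x i - x j).
Proof. by move=> ji; apply: abs_neq0; rewrite // subr_eq0 hx // eq_sym. Qed.

Lemma claim m : inD f m x /\
  (forall j, abs (Tmap f m x j - xi j) <= bb m * abs (x j - xi j)) /\
  (forall j, abs (x j - Tmap f m x j) <= aa m * abs (x j - xi j)).
Proof.
elim: m => [|m [hD [hb ha]]].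
  split => //; split => j /=; first by rewrite mul1r.
  by rewrite subrr abs0 // mul0r.
set y := Tmap f m x.
have Dlow : forall i j, j != i -> abs (x i - x j) * (1 - aa m * E) <= abs (x i - y j).
  move=> i j ji.
  have h1 := abs_sub_ge habs (x i - x j) (y j - x j).
  have e1 : x i - x j - (y j - x j) = x i - y j by ring.
  rewrite e1 (abs_subC habs (y j)) in h1.
  have h2 := ha j.
  have h3 : aa m * abs (x j - xi j) <= aa m * (E * abs (x i - x j)).
    apply: ler_wpM2l; first exact: aa_ge0.
    apply: le_trans (ej_le ji) _; apply: ler_wpM2r; first exact: abs_ge0.
    exact: t_le_E.
  lra.
have Dpos : forall i j, j != i -> 0 < abs (x i - y j).
  move=> i j ji; apply: lt_le_trans (Dlow i j ji).
  by rewrite mulr_gt0 ?xdist_pos // subr_gt0 aaE_lt1.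
have Dneq : forall i j, j != i -> x i != y j.
  move=> i j ji; apply/negP => /eqP hxy; have := Dpos i j ji.
  by rewrite hxy subrr abs0 // ltxx.
have ubound : forall i j, j != i ->
    abs ((y j - xi j) / (x i - y j)) <= cm m * t j.
  move=> i j ji; rewrite abs_div // ler_pdivrMr ?Dpos //.
  apply: le_trans (hb j) _.
  have ha0 := xdist_pos ji; have hl := aaE_lt1 m.
  have -> : cm m * t j * abs (x i - y j) =
    bb m * t j * (abs (x i - y j) / (1 - aa m * E)).
    by rewrite /cm /tv; field; rewrite !gt_eqF ?subr_gt0 ?d_pos.
  rewrite -mulrA ler_wpM2l ?bb_ge0 //.
  apply: le_trans (ej_le ji) _; apply: ler_wpM2l; first exact: t_ge0.
  by rewrite ler_pdivlMr ?subr_gt0 // Dlow.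
have Pbound : forall i,
    \prod_(j < n | j != i) (1 + abs ((y j - xi j) / (x i - y j))) - 1 <= bb m.+1.
  move=> i.
  have h := @prod_omega R n p p1 n1 t (fun j => abs ((y j - xi j) / (x i - y j))) i (cm m)
    t_ge0 (cm_ge0 m).
  have {}h := h (fun j ji => introT andP (conj (abs_ge0 habs _) (ubound i j ji))).
  have hc := @omega_conv R n p p1 n1 (cm m) E (introT andP (conj (cm_ge0 m) (cm_le1 m))) E_ge0.
  have := cm_beta m; lra.
have Talg : forall i, x i - Tmap f m.+1 x i =
    (x i - xi i) * \prod_(j < n | j != i) (1 + (y j - xi j) / (x i - y j)).
  by move=> i; apply: T_alg => // j ji; apply: Dneq.
split; first by split => // i j ij; apply: Dneq; rewrite eq_sym.
split => i.
  have -> : Tmap f m.+1 x i - xi i =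
      - ((x i - xi i) * (\prod_(j < n | j != i) (1 + (y j - xi j) / (x i - y j)) - 1)).
    by rewrite mulrBr -Talg mulr1; ring.
  rewrite absN // absM // mulrC; apply: ler_wpM2r; first exact: abs_ge0.
  apply: le_trans (abs_prod1 habs _ _ _) _; exact: Pbound.
rewrite Talg absM // mulrC; apply: ler_wpM2r; first exact: abs_ge0.
rewrite abs_prod //.
apply: le_trans (_ : \prod_(j < n | j != i) (1 + abs ((y j - xi j) / (x i - y j))) <= _).
  apply: ler_prod => j _; rewrite abs_ge0 //=.
  by have := abs_triangle habs 1 ((y j - xi j) / (x i - y j)); rewrite abs1.
have := Pbound i; have := bbS_le m; rewrite /aa; lra.
Qed.

Lemma dist5 (a b c d g : K) :
  abs (a + c - d - g + b) <= abs a + abs c + abs d + abs g + abs b.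
Proof.
apply: le_trans (abs_triangle habs _ _) _; rewrite lerD2r.
apply: le_trans (abs_sub_le habs _ _) _; rewrite lerD2r.
apply: le_trans (abs_sub_le habs _ _) _; rewrite lerD2r.
exact: abs_triangle.
Qed.

Lemma step_main (N : nat) : (0 < N)%N ->
  [/\ inD f N x,
   (forall i, abs (Tmap f N x i - xi i) <= (w - 1) * phE ^+ N.-1 * abs (x i - xi i)),
   (forall i j, i != j -> Tmap f N x i != Tmap f N x j)
   & Efun abs p xi (Tmap f N x) <= phE ^+ N * E].
Proof.
case: N => [//|N] _.
have [hD [hb _]] := claim N.+1.
set y := Tmap f N.+1 x in hb *.
have hbb : bb N.+1 = (w - 1) * phE ^+ N by [].
have d0 := den_gt0.
have Alow : forall i j, j != i ->
    abs (x i - x j) * (1 - 2 * E * w) <= abs (y i - y j).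
  move=> i j ji.
  have h := dist5 (y i - y j) (y j - xi j) (x i - xi i) (y i - xi i) (x j - xi j).
  have e0 : y i - y j + (x i - xi i) - (y i - xi i) - (x j - xi j) + (y j - xi j) =
    x i - x j by ring.
  rewrite e0 in h.
  have hi := hb i; have hj := hb j; have hbl := bbS_le N.
  have ei := ei_le ji; have ej := ej_le ji.
  have ti := t_le_E i; have tj := t_le_E j; have ti0 := t_ge0 i; have tj0 := t_ge0 j.
  have A0 := abs_ge0 habs (x i - x j).
  have hbb0 := bb_ge0 N.+1.
  have e1 : abs (x i - xi i) + abs (y i - xi i) <= w * (E * abs (x i - x j)).
    have : (1 + bb N.+1) * abs (x i - xi i) <= w * (t i * abs (x i - x j)).
      apply: ler_pM; [lra | exact: abs_ge0 | lra | exact: ei].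
    have : t i * abs (x i - x j) <= E * abs (x i - x j) by rewrite ler_wpM2r.
    have := w_ge1; nra.
  have e2 : abs (x j - xi j) + abs (y j - xi j) <= w * (E * abs (x i - x j)).
    have : (1 + bb N.+1) * abs (x j - xi j) <= w * (t j * abs (x i - x j)).
      apply: ler_pM; [lra | exact: abs_ge0 | lra | exact: ej].
    have : t j * abs (x i - x j) <= E * abs (x i - x j) by rewrite ler_wpM2r.
    have := w_ge1; nra.
  lra.
have Apos : forall i j, j != i -> 0 < abs (y i - y j).
  move=> i j ji; apply: lt_le_trans (Alow i j ji).
  by rewrite mulr_gt0 ?xdist_pos.
have yneq : forall i j, i != j -> y i != y j.
  move=> i j ij; apply/negP => /eqP hxy; have := Apos i j; rewrite eq_sym => /(_ ij).
  by rewrite hxy subrr abs0 // ltxx.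
have dlow : forall i, dvec abs x i * (1 - 2 * E * w) <= dvec abs y i.
  move=> i; apply: dvec_ge => // j ji; apply: le_trans (Alow i j ji).
  by rewrite ler_wpM2r ?(ltW d0) // dvec_le.
split => //.
have c0 : 0 <= (w - 1) * phE ^+ N / (1 - 2 * E * w).
  by rewrite divr_ge0 ?(ltW d0) // -hbb bb_ge0.
have -> : phE ^+ N.+1 = (w - 1) * phE ^+ N / (1 - 2 * E * w).
  by rewrite exprS phE_def mulrAC mulrC.
change (pnorm p (tv y) <= (w - 1) * phE ^+ N / (1 - 2 * E * w) * pnorm p (tv x)).
apply: pnorm_le => // i.
have dy := d_pos i.
have dy' : 0 < dvec abs y i.
  by apply: dvec_pos => // j ji; apply: yneq; rewrite eq_sym.
have ty0 : 0 <= tv y i by rewrite /tv divr_ge0 ?(abs_ge0 habs) // ltW.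
rewrite (ger0_norm ty0) (ger0_norm (t_ge0 i)) /tv ler_pdivrMr //.
apply: le_trans (hb i) _; rewrite -hbb.
have -> : bb N.+1 / (1 - 2 * E * w) * (abs (x i - xi i) / dvec abs x i) * dvec abs y i
  = bb N.+1 * abs (x i - xi i) * (dvec abs y i / (dvec abs x i * (1 - 2 * E * w))).
  by field; rewrite !gt_eqF.
rewrite -{1}(mulr1 (bb N.+1 * _)); apply: ler_wpM2l.
  by rewrite mulr_ge0 ?bb_ge0 ?abs_ge0.
by rewrite ler_pdivlMr ?mul1r ?mulr_gt0 ?dlow.
Qed.

Lemma xi_dist i j : j != i -> abs (xi i - xi j) <= abs (x i - x j) * (1 + 2 * E).
Proof.
move=> ji.
have e0 : xi i - xi j = (x i - x j) - (x i - xi i) + (x j - xi j) by ring.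
rewrite e0; apply: le_trans (abs_triangle habs _ _) _.
have h := abs_sub_le habs (x i - x j) (x i - xi i).
have ei := ei_le ji; have ej := ej_le ji.
have ti := t_le_E i; have tj := t_le_E j.
have A0 := abs_ge0 habs (x i - x j).
have : t i * abs (x i - x j) <= E * abs (x i - x j) by rewrite ler_wpM2r.
have : t j * abs (x i - x j) <= E * abs (x i - x j) by rewrite ler_wpM2r.
lra.
Qed.

Lemma xi_low i j : j != i -> abs (x i - x j) * (1 - 2 * E) <= abs (xi i - xi j).
Proof.
move=> ji.
have e0 : x i - x j = (xi i - xi j) + (x i - xi i) - (x j - xi j) by ring.
have h1 := abs_triangle habs ((xi i - xi j) + (x i - xi i)) (- (x j - xi j)).
have h2 := abs_triangle habs (xi i - xi j) (x i - xi i).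
rewrite -e0 absN // in h1.
have ei := ei_le ji; have ej := ej_le ji.
have ti := t_le_E i; have tj := t_le_E j.
have A0 := abs_ge0 habs (x i - x j).
have : t i * abs (x i - x j) <= E * abs (x i - x j) by rewrite ler_wpM2r.
have : t j * abs (x i - x j) <= E * abs (x i - x j) by rewrite ler_wpM2r.
lra.
Qed.

Lemma twoE_lt1 : 2 * E < 1.
Proof. have := den_gt0; have := w_ge1; have := E_ge0; nra. Qed.

Lemma xi_neq i j : j != i -> xi i != xi j.
Proof.
move=> ji; apply/negP => /eqP h; have := xi_low ji; rewrite h subrr abs0 //.
have := xdist_pos ji; have := twoE_lt1; clear h => ? ? ?; nra.
Qed.
End Step.

Lemma mup_le1 (K : closedFieldType) n (f : {poly K}) (xi : 'I_n -> K) :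
  root_vector f xi -> lead_coef f != 0 -> (forall i j, i != j -> xi i != xi j) -> forall z, (mup z f <= 1)%N.
Proof.
move=> hf a0 hxi z.
set q := \prod_(i < n) ('X - (xi i)%:P).
have hq : f = lead_coef f *: q.
  apply/eqP; rewrite -subr_eq0; set g := f - _.
  have hg : forall y, g.[y] = 0.
    move=> y; rewrite /g hornerD hornerN hornerZ /q horner_prod hf.
    by under eq_bigr do rewrite hornerXsubC; rewrite subrr.
  case: (eqVneq (size (g - 1)) 1%N) => h.
    have [c _ hc] := size_poly1P _ (introT eqP h).
    have hg' : g = (c + 1)%:P by rewrite polyCD -hc subrK.
    have hc1 : c + 1 = 0 by have := hg 0; rewrite hg' hornerC.
    by rewrite -/g hg' hc1 polyC0.
  have [y hy] := closed_rootP _ h.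
  move: hy; rewrite /root hornerD hornerN hg hornerC add0r oppr_eq0 oner_eq0 //.
rewrite hq -mul_polyC mupMr; last by rewrite /root hornerC.
have -> : q = \prod_(y <- [seq xi i | i <- enum 'I_n]) ('X - y%:P).
  by rewrite big_map big_enum.
rewrite mu_prod_XsubC count_uniq_mem ?leq_b1 //.
rewrite map_inj_uniq ?enum_uniq // => i j hij.
apply/eqP; apply: contraTT (introT eqP hij) => /hxi; exact.
Qed.

Lemma geo_cvg (R : realType) (u : nat -> R) (q C : R) : 0 <= q < 1 ->
  (forall k, 0 <= u k <= C * q ^+ k) -> u @ \oo --> (0 : R).
Proof.
move=> /andP[q0 q1] hu.
apply: (@squeeze_cvgr _ _ _ _ (cst 0) (fun k => C * q ^+ k)).
- by apply: nearW => k; exact: hu.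
- exact: cvg_cst.
have hq : `|q| < 1 by rewrite ger0_norm.
exact: (cvg_geometric C hq).
Qed.

Lemma expo_eq (N k : nat) : (N.+1 ^ k * N + (N.+1 ^ k - 1) = N.+1 ^ k.+1 - 1)%N.
Proof. by rewrite expnS; have := expn_gt0 N.+1 k; lia. Qed.

Section Main.
Variables (K : closedFieldType) (R : realType) (abs : K -> R).
Hypothesis habs : is_abs abs.
Variables (n : nat) (f : {poly K}) (xi : 'I_n -> K) (N : nat) (p : \bar R) (x0 : 'I_n -> K).
Hypothesis n1 : (2 <= n)%N.
Hypothesis hsize : size f = n.+1.
Hypothesis hf : root_vector f xi.
Hypothesis N1 : (1 <= N)%N.
Hypothesis p1 : (1 <= p)%E.
Hypothesis hx0 : forall i j : 'I_n, i != j -> x0 i != x0 j.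
Hypothesis hPsi0 : Psi n p (Efun abs p xi x0) <= 2.

Local Notation xk k := (iterT f N x0 k).
Local Notation Ek k := (Efun abs p xi (xk k)).
Local Notation E0 := (Efun abs p xi x0).
Local Notation lam := (phi n p E0).
Local Notation b0 := (omega n p E0 - 1).

Lemma a0nz : lead_coef f != 0.
Proof. by rewrite lead_coef_eq0 -size_poly_gt0 hsize. Qed.

Lemma Efun_ge0 (x : 'I_n -> K) : 0 <= Efun abs p xi x.
Proof. exact: pnorm_ge0. Qed.

Lemma inv k :
  [/\ (forall i j, i != j -> xk k i != xk k j),
     Psi n p (Ek k) <= 2,
     Ek k <= E0,
     phi n p (Ek k) <= lam ^+ (N.+1 ^ k)
   & (forall i, abs (xk k i - xi i) <= lam ^+ (N.+1 ^ k - 1) * abs (x0 i - xi i)) /\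
     (forall i, abs (xk k i - xi i) <= b0 ^+ k * abs (x0 i - xi i))].
Proof.
elim: k => [|k [hd hP hE hph [he hb]]].
  by split => //=; split => i; rewrite mul1r.
have [hD hs hd' hE'] := step_main habs n1 hf a0nz p1 hd hP N1.
have Ek0 := Efun_ge0 (xk k).
have Ek10 := Efun_ge0 (xk k.+1).
set phk := phi n p (Ek k) in hph hs hE'.
have phk0 : 0 <= phk by have := phi_ge0 p1 n1 Ek0 hP.
have phk1 : phk <= 1 by have := phi_le1 p1 n1 Ek0 hP.
have phN1 : phk ^+ N <= 1 by rewrite exprn_ile1.
have phN0 : 0 <= phk ^+ N by rewrite exprn_ge0.
have lam0 : 0 <= lam by have := phi_ge0 p1 n1 (Efun_ge0 x0) hPsi0.
have hE1 : Ek k.+1 <= Ek k.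
  apply: le_trans hE' _; rewrite -{2}(mul1r (Ek k)); exact: ler_wpM2r.
split => //.
- by apply: le_trans (Psi_mono p1 n1 Ek10 hE1) hP.
- exact: le_trans hE1 hE.
- have h1 : phi n p (Ek k.+1) <= phk ^+ N * phk.
    apply: (phi_quasi p1 n1 Ek0 hP) => //; by rewrite phN0 phN1.
  apply: le_trans h1 _; rewrite -exprSr expnSr exprM.
  by apply: lerXn2r; rewrite ?nnegrE ?exprn_ge0.
have hN : phk ^+ N = phk * phk ^+ N.-1 by rewrite -exprS prednK.
have wk1 := omega_ge1 p1 n1 Ek0.
have phN10 : 0 <= phk ^+ N.-1 by rewrite exprn_ge0.
have phN11 : phk ^+ N.-1 <= 1 by rewrite exprn_ile1.
split => i.
  have f1 : (omega n p (Ek k) - 1) * phk ^+ N.-1 <= phk ^+ N.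
    rewrite hN; apply: ler_wpM2r => //; by have := beta_le_phi p1 n1 Ek0 hP.
  have f2 : phk ^+ N <= lam ^+ (N.+1 ^ k * N).
    by rewrite exprM; apply: lerXn2r; rewrite ?nnegrE ?exprn_ge0.
  apply: le_trans (hs i) _.
  apply: le_trans (_ : lam ^+ (N.+1 ^ k * N) * abs (xk k i - xi i) <= _).
    apply: ler_wpM2r; [exact: abs_ge0 | exact: le_trans f1 f2].
  apply: le_trans (_ : lam ^+ (N.+1 ^ k * N) * (lam ^+ (N.+1 ^ k - 1) * abs (x0 i - xi i)) <= _).
    by apply: ler_wpM2l; [exact: exprn_ge0 | exact: he].
  rewrite mulrA -exprD.
  have -> : (N.+1 ^ k * N + (N.+1 ^ k - 1) = N.+1 ^ k.+1 - 1)%N.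
    exact: expo_eq.
  done.
have f3 : (omega n p (Ek k) - 1) * phk ^+ N.-1 <= b0.
  apply: le_trans (_ : omega n p (Ek k) - 1 <= _).
    rewrite -{2}(mulr1 (omega n p (Ek k) - 1)); apply: ler_wpM2l => //.
    by rewrite subr_ge0.
  by rewrite lerD2r; apply: omega_mono.
have b00 : 0 <= b0 by rewrite subr_ge0; have := omega_ge1 p1 n1 (Efun_ge0 x0).
apply: le_trans (hs i) _.
apply: le_trans (_ : b0 * abs (xk k i - xi i) <= _).
  by apply: ler_wpM2r; [exact: abs_ge0 | exact: f3].
by rewrite exprS -mulrA; apply: ler_wpM2l => //; exact: hb.
Qed.

Lemma xi_distinct i j : i != j -> xi i != xi j.
Proof. by move=> ij; apply: (xi_neq habs n1 p1 hx0 hPsi0); rewrite eq_sym. Qed.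

Lemma b0_bounds : 0 <= b0 < 1.
Proof.
have E00 := Efun_ge0 x0; have w1 := omega_ge1 p1 n1 E00.
apply/andP; split; first lra.
have [h0|hp] := eqVneq E0 0; first by rewrite h0 omega0 subrr.
have Ep : 0 < E0 by rewrite lt_neqAle eq_sym hp.
have w1' := omega_gt1 p1 n1 Ep.
move: hPsi0; rewrite /Psi => h; nra.
Qed.

Lemma conv_part i : (fun k => abs (xk k i - xi i)) @ \oo --> (0 : R).
Proof.
apply: (@geo_cvg R _ b0 (abs (x0 i - xi i))); first exact: b0_bounds.
move=> k; have [_ _ _ _ [_ hb]] := inv k.
by rewrite abs_ge0 //= mulrC hb.
Qed.

Lemma maxerr_ge (x : 'I_n -> K) i : abs (x i - xi i) <= maxerr abs x xi.
Proof. exact: (le_bigmax _ (fun i => abs (x i - xi i))). Qed.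

Lemma maxerr_ge0 (x : 'I_n -> K) : 0 <= maxerr abs x xi.
Proof. exact: bigmax_ge_id. Qed.

Lemma order_part : exists C : R, forall k,
  maxerr abs (xk k.+1) xi <= C * maxerr abs (xk k) xi ^+ N.+1.
Proof.
set del := fun i => dvec abs xi i.
have del0 : forall i, 0 < del i.
  by move=> i; apply: dvec_pos => // j ji; apply: xi_distinct; rewrite eq_sym.
set cc := \sum_(i < n) 2 / del i.
have E00 := Efun_ge0 x0.
set kap := (omega n p 1 - 1) / (1 - 2 * E0 * omega n p E0).
have kap0 : 0 <= kap.
  apply: divr_ge0; first by rewrite subr_ge0 omega_ge1.
  by apply: ltW; have := den_pos p1 n1 E00 hPsi0.
have cc0 : 0 <= cc by apply: sumr_ge0 => i _; rewrite divr_ge0 // ltW.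
exists ((kap * cc) ^+ N) => k.
have [hd hP hE _ _] := inv k.
have [_ hs _ _] := step_main habs n1 hf a0nz p1 hd hP N1.
set Mk := maxerr abs (xk k) xi.
have Mk0 : 0 <= Mk by exact: maxerr_ge0.
have Ek0 := Efun_ge0 (xk k).
have Eh := E_le_half p1 n1 Ek0 hP.
have dlow : forall i, del i / 2 <= dvec abs (xk k) i.
  move=> i; apply: dvec_ge => // j ji.
  have h1 : dvec abs xi i <= abs (xi i - xi j) by apply: dvec_le.
  have h2 := xi_dist habs xi n1 p1 hd ji.
  have A0 := abs_ge0 habs (xk k i - xk k j).
  have : abs (xk k i - xk k j) * (1 + 2 * Ek k) <= abs (xk k i - xk k j) * 2.
    by apply: ler_wpM2l => //; lra.
  rewrite /del; lra.
have hEk : Ek k <= cc * Mk.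
  apply: le_trans (pnorm_le_sum p1 _) _.
  rewrite /cc mulr_suml; apply: ler_sum => i _.
  have dp := del0 i; have dl := dlow i.
  have dk : 0 < dvec abs (xk k) i by apply: lt_le_trans dl; rewrite divr_gt0.
  rewrite ger0_norm; last by rewrite divr_ge0 ?abs_ge0 // ltW.
  rewrite ler_pdivrMr //.
  have hm := maxerr_ge (xk k) i.
  apply: le_trans hm _.
  have -> : 2 / del i * Mk * dvec abs (xk k) i = Mk * (dvec abs (xk k) i / (del i / 2)).
    by field; rewrite gt_eqF.
  apply: (@le_trans _ _ (Mk * 1)); first by rewrite mulr1.
  apply: ler_wpM2l => //.
  by rewrite ler_pdivlMr ?mul1r // divr_gt0.
set phk := phi n p (Ek k) in hs.
have phk0 : 0 <= phk by have := phi_ge0 p1 n1 Ek0 hP.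
have hph : phk <= kap * cc * Mk.
  have := phi_lin p1 n1 E00 hPsi0 Ek0 hE; rewrite -/kap -/phk => h.
  apply: le_trans h _; rewrite mulrC -mulrA; exact: ler_wpM2l.
have hN : phk ^+ N = phk * phk ^+ N.-1 by rewrite -exprS prednK.
have wk1 := omega_ge1 p1 n1 Ek0.
have phN10 : 0 <= phk ^+ N.-1 by rewrite exprn_ge0.
have f1 : (omega n p (Ek k) - 1) * phk ^+ N.-1 <= (kap * cc * Mk) ^+ N.
  apply: le_trans (_ : phk ^+ N <= _).
    rewrite hN; apply: ler_wpM2r => //; by have := beta_le_phi p1 n1 Ek0 hP.
  apply: lerXn2r; [by rewrite nnegrE | rewrite nnegrE; apply: mulr_ge0 => //; exact: mulr_ge0 | exact: hph].
apply: bigmax_le => [|i _].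
  by rewrite mulr_ge0 ?exprn_ge0 // mulr_ge0.
apply: le_trans (hs i) _.
apply: le_trans (_ : (kap * cc * Mk) ^+ N * Mk <= _).
  apply: ler_pM => //; [by rewrite mulr_ge0 ?exprn_ge0 ?subr_ge0 | exact: abs_ge0 | exact: maxerr_ge].
by rewrite exprMn exprSr mulrA.
Qed.

Lemma step_bound k i :
  abs (xk k.+1 i - xi i) <= lam ^+ (N * N.+1 ^ k) * abs (xk k i - xi i).
Proof.
have [hd hP hE hph _] := inv k.
have [_ hs _ _] := step_main habs n1 hf a0nz p1 hd hP N1.
have Ek0 := Efun_ge0 (xk k).
set phk := phi n p (Ek k) in hph hs.
have phk0 : 0 <= phk by have := phi_ge0 p1 n1 Ek0 hP.
have lam0 : 0 <= lam by have := phi_ge0 p1 n1 (Efun_ge0 x0) hPsi0.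
have hN : phk ^+ N = phk * phk ^+ N.-1 by rewrite -exprS prednK.
have phN10 : 0 <= phk ^+ N.-1 by rewrite exprn_ge0.
have f1 : (omega n p (Ek k) - 1) * phk ^+ N.-1 <= phk ^+ N.
  rewrite hN; apply: ler_wpM2r => //; by have := beta_le_phi p1 n1 Ek0 hP.
have f2 : phk ^+ N <= lam ^+ (N * N.+1 ^ k).
  by rewrite mulnC exprM; apply: lerXn2r; rewrite ?nnegrE ?exprn_ge0.
apply: le_trans (hs i) _.
apply: ler_wpM2r; [exact: abs_ge0 | exact: le_trans f1 f2].
Qed.

Lemma final :
  (forall z : K, (mup z f <= 1)%N) /\
  [/\ (forall k, inD f N (iterT f N x0 k)),
      (forall i : 'I_n, (fun k => abs (iterT f N x0 k i - xi i)) @ \oo --> (0 : R)),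
      (forall k (i : 'I_n),
         abs (iterT f N x0 k.+1 i - xi i)
           <= lam ^+ (N * (N.+1) ^ k) * abs (iterT f N x0 k i - xi i)),
      (forall k (i : 'I_n),
         abs (iterT f N x0 k i - xi i)
           <= lam ^+ ((N.+1) ^ k - 1) * abs (x0 i - xi i))
    & (Psi n p (Efun abs p xi x0) < 2 ->
         conv_order abs (iterT f N x0) xi N.+1)].
Proof.
split; first exact: (mup_le1 hf a0nz xi_distinct).
split.
- move=> k; have [hd hP _ _ _] := inv k.
  by have [] := step_main habs n1 hf a0nz p1 hd hP N1.
- exact: conv_part.
- exact: step_bound.
- by move=> k i; have [_ _ _ _ [he _]] := inv k.
- by move=> _; split; [exact: conv_part | exact: order_part].
Qed.

End Main.

Theorem corollary2p12 (K : closedFieldType) (R : realType) (abs : K -> R)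
  (habs : is_abs abs) (n : nat) (f : {poly K}) (xi : 'I_n -> K) (N : nat)
  (p : \bar R) (x0 : 'I_n -> K) :
  (2 <= n)%N -> size f = n.+1 -> root_vector f xi -> (1 <= N)%N ->
  (1 <= p)%E ->
  (forall i j : 'I_n, i != j -> x0 i != x0 j) ->
  Psi n p (Efun abs p xi x0) <= 2 ->
  let lambda := phi n p (Efun abs p xi x0) in
  (forall z : K, (mup z f <= 1)%N) /\
  [/\ 
      (forall k, inD f N (iterT f N x0 k)),
      (forall i : 'I_n, (fun k => abs (iterT f N x0 k i - xi i)) @ \oo --> (0 : R)),
      (forall k (i : 'I_n),
         abs (iterT f N x0 k.+1 i - xi i)
           <= lambda ^+ (N * (N.+1) ^ k) * abs (iterT f N x0 k i - xi i)),
      (forall k (i : 'I_n),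
         abs (iterT f N x0 k i - xi i)
           <= lambda ^+ ((N.+1) ^ k - 1) * abs (x0 i - xi i))
    & (Psi n p (Efun abs p xi x0) < 2 ->
         conv_order abs (iterT f N x0) xi N.+1)].
Proof.
move=> n1 hsize hf N1 p1 hx0 hPsi0 lambda.
exact: (final habs n1 hsize hf N1 p1 hx0 hPsi0).
Qed.
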